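(* Let $\Gamma=\langle V,(w_u)_{u\in V},\alpha,\beta\rangle$ be a star celebrity game with $\beta>1$ and $n=|V|$, let $S$ be a Nash equilibrium of $\Gamma$ and $G=G[S]$. If there is a vertex $v\in V$ with $|S_v|>6n/\beta$, then there exists $X\subseteq S_v$ with $|X|\ge 3n/\beta$ such that for every $x\in X$ the edge $\{v,x\}$ is a bridge of $G$.
   Context: A celebrity game $\Gamma=\langle V,(w_u)_{u\in V},\alpha,\beta\rangle$ consists of a set of players $V=\{1,\dots,n\}$, celebrity weights $w_u>0$, a link cost $\alpha>0$ and a critical distance $\beta$ with $1\le\beta\le n-1$. A strategy of player $u$ is a set $S_u\subseteq V\setminus\{u\}$; a strategy profile is $S=(S_1,\dots,S_n)$; its outcome graph $G[S]$ is the undirected graph on $V$ with edge set $\{\{u,v\}: u\in S_v\text{ or }v\in S_u\}$. With $d_G$ the graph distance (infinite between different connected components), the cost of player $u$ is $c_u(S)=\alpha|S_u|+\sum_{v:\,d_{G[S]}(u,v)>\beta}w_v$. $S$ is a Nash equilibrium if no player can strictly decrease its cost by changing only its own strategy. $\Gamma$ is a star celebrity game if $G[S]$ is connected for some Nash equilibrium $S$. A bridge is an edge whose removal increases the number of connected components. *)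

(* Defs.v *)
From mathcomp Require Import all_boot all_order all_algebra.
Set Implicit Arguments. Unset Strict Implicit. Unset Printing Implicit Defensive.
Import Order.TTheory GRing.Theory Num.Theory.

Section Celebrity.
Variable n : nat.
Local Notation V := 'I_n.

(* a strategy profile: S u is the set of players u buys links to *)
Definition profile := V -> {set V}.

Definition valid_profile (S : profile) : Prop := forall u, u \notin S u.

Definition outcome (S : profile) : rel V :=
  fun u v => (u != v) && ((u \in S v) || (v \in S u)).

Fixpoint ball (e : rel V) (k : nat) (u : V) : {set V} :=
  match k with
  | 0 => [set u]
  | k'.+1 => ball e k' u :|: [set y | [exists x in ball e k' u, e x y]]
  end.

(* d_e(u,v) > k  (infinite distance included) *)
Definition dist_gt (e : rel V) (u v : V) (k : nat) : bool := v \notin ball e k u.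

Variable R : realFieldType.

Definition cost (w : V -> R) (alpha : R) (beta : nat) (S : profile) (u : V) : R :=
  (alpha * (#|S u|%:R) + \sum_(v | dist_gt (outcome S) u v beta) w v)%R.

Definition deviate (S : profile) (u : V) (T : {set V}) : profile :=
  fun x => if x == u then T else S x.

Definition nash (w : V -> R) (alpha : R) (beta : nat) (S : profile) : Prop :=
  valid_profile S /\
  forall u (T : {set V}), u \notin T ->
    (cost w alpha beta S u <= cost w alpha beta (deviate S u T) u)%R.

Definition connected_graph (e : rel V) : Prop := forall u v, connect e u v.

Definition star_game (w : V -> R) (alpha : R) (beta : nat) : Prop :=
  exists S, nash w alpha beta S /\ connected_graph (outcome S).

Definition ncomp (e : rel V) : nat := n_comp e predT.

Definition remove_edge (e : rel V) (u v : V) : rel V :=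
  fun x y => e x y && ([set x; y] != [set u; v]).

Definition bridge (e : rel V) (u v : V) : Prop :=
  e u v /\ (ncomp e < ncomp (remove_edge e u v))%N.

End Celebrity.

(* Main.v *)
Require Import Defs.
From mathcomp Require Import all_boot all_order all_algebra.
From mathcomp Require Import zify.
Import Order.TTheory GRing.Theory Num.Theory.
Set Implicit Arguments. Unset Strict Implicit. Unset Printing Implicit Defensive.


Section Balls.
Variable n : nat.
Implicit Types (e : rel 'I_n) (u x y z q : 'I_n).

Lemma ball_succP e k u y :
  (y \in ball e k.+1 u) = (y \in ball e k u) || [exists x in ball e k u, e x y].
Proof. by rewrite /= in_setU inE. Qed.

Lemma ball0P e u y : (y \in ball e 0 u) = (y == u).
Proof. by rewrite /= in_set1. Qed.

Lemma ball_S e k u y : y \in ball e k u -> y \in ball e k.+1 u.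
Proof. by move=> h; rewrite ball_succP h. Qed.

Lemma ball_mono e k m u y : k <= m -> y \in ball e k u -> y \in ball e m u.
Proof.
elim: m => [|m IH]; first by rewrite leqn0 => /eqP->.
rewrite leq_eqVlt => /orP[/eqP->//|hk] h; exact/ball_S/IH.
Qed.

Lemma ball_center e k u : u \in ball e k u.
Proof. apply: (@ball_mono e 0) => //; by rewrite ball0P. Qed.

Lemma ball_step e k u x y : x \in ball e k u -> e x y -> y \in ball e k.+1 u.
Proof.
move=> hx hxy; rewrite ball_succP; apply/orP; right; apply/existsP; exists x.
by rewrite hx.
Qed.

Lemma ball_caseS e k u y : y \in ball e k.+1 u ->
  y \in ball e k u \/ exists2 x, x \in ball e k u & e x y.
Proof.
rewrite ball_succP => /orP[h|/existsP[x /andP[h1 h2]]]; [by left|right].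
by exists x.
Qed.

Lemma ball_trans e a b u y z :
  y \in ball e a u -> z \in ball e b y -> z \in ball e (a + b) u.
Proof.
move=> hy; elim: b z => [|b IH] z.
  by rewrite ball0P addn0 => /eqP->.
case/ball_caseS=> [h|[x hx hxz]].
  by apply: (@ball_mono _ (a + b)); [lia| exact: IH].
rewrite addnS; apply: ball_step (IH _ hx) hxz.
Qed.

Lemma ball_split e a b u z :
  z \in ball e (a + b) u -> exists2 q, q \in ball e a u & z \in ball e b q.
Proof.
elim: b z => [|b IH] z.
  by rewrite addn0 => h; exists z => //; rewrite ball0P.
rewrite addnS; case/ball_caseS=> [h|[x hx hxz]].
  by case: (IH _ h) => q hq hz; exists q => //; exact: ball_S.
case: (IH _ hx) => q hq hz; exists q => //; exact: ball_step hz hxz.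
Qed.

Lemma ball_sym e k u y : symmetric e -> y \in ball e k u -> u \in ball e k y.
Proof.
move=> se; elim: k y => [|k IH] y.
  by rewrite !ball0P eq_sym.
case/ball_caseS=> [h|[x hx hxy]].
  exact/ball_S/IH.
have h1 : x \in ball e 1 y by apply: (ball_step (ball_center e 0 y)); rewrite se.
by have := ball_trans h1 (IH _ hx); rewrite add1n.
Qed.

Lemma ball_sub e e' k u y : (forall a b, e' a b -> e a b) ->
  y \in ball e' k u -> y \in ball e k u.
Proof.
move=> sub; elim: k y => [|k IH] y //.
case/ball_caseS=> [h|[x hx hxy]]; first exact/ball_S/IH.
exact: ball_step (IH _ hx) (sub _ _ hxy).
Qed.

Lemma eq_ball e e' k u : e =2 e' -> ball e k u = ball e' k u.
Proof.
move=> ee; apply/setP => y; apply/idP/idP; apply: ball_sub => a b;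
  by rewrite ee.
Qed.

Lemma connect_ball e a b : connect e a b -> exists m, b \in ball e m a.
Proof.
move=> /connectP[p]; elim: p a => [|c p IH] a /=.
  by move=> _ ->; exists 0; rewrite ball0P.
case/andP=> hac hp hb; case: (IH c hp hb) => m hm; exists (1 + m).
apply: ball_trans hm; exact: ball_step (ball_center e 0 a) hac.
Qed.

Lemma ball_chain e x y L : y \in ball e L x -> (forall k, k < L -> y \notin ball e k x) ->
  forall t, t <= L -> exists q, [/\ q \in ball e t x, y \in ball e (L - t) q &
     forall k, k < t -> q \notin ball e k x].
Proof.
move=> hy hmin t ht.
have : y \in ball e (t + (L - t)) x by rewrite subnKC.
case/ball_split=> q hq hyq.
exists q; split => // k hk; apply/negP => hqk.
have := ball_trans hqk hyq; apply/negP; apply: hmin; lia.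
Qed.

Lemma ball_count e x (D : {set 'I_n}) T :
  (forall t, t <= T -> exists q, [/\ q \in D, q \in ball e t x &
     forall k, k < t -> q \notin ball e k x]) -> T.+1 <= #|D|.
Proof.
move=> H.
suff: forall t, t <= T -> t.+1 <= #|D :&: ball e t x|.
  move=> /(_ T (leqnn T)) h; apply: leq_trans h _; apply/subset_leq_card/subsetIl.
elim=> [|t IH] ht.
  case: (H 0 ht) => q [qD qb _]; rewrite card_gt0; apply/set0Pn; exists q.
  by rewrite in_setI qD.
apply: leq_ltn_trans (IH (ltnW ht)) _; apply: proper_card; apply/properP; split.
  apply/subsetP => y; rewrite !in_setI => /andP[-> h]; exact: ball_S h.
case: (H t.+1 ht) => q [qD qb qn]; exists q; first by rewrite in_setI qD.
by rewrite in_setI qD /= (negbTE (qn t (ltnSn t))).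
Qed.

End Balls.


Section Graph.
Variable n : nat.
Implicit Types (e : rel 'I_n) (u x y z q a b c d : 'I_n).

Lemma set2_eq a b c d : [set a; b] = [set c; d] ->
  (a = c /\ b = d) \/ (a = d /\ b = c).
Proof.
move=> E.
have ha : a \in [set c; d] by rewrite -E set21.
have hb : b \in [set c; d] by rewrite -E set22.
have hc : c \in [set a; b] by rewrite E set21.
have hd : d \in [set a; b] by rewrite E set22.
move: ha hb hc hd; rewrite !inE.
case/orP=> /eqP Ha; case/orP=> /eqP Hb; subst a b => hc hd.
- by left; split=> //; case/orP: hd => /eqP.
- by left.
- by right.
- by left; split=> //; case/orP: hc => /eqP.
Qed.

Lemma re_or e v x a b : e a b ->
  remove_edge e v x a b \/ (a = v /\ b = x) \/ (a = x /\ b = v).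
Proof.
move=> hab; rewrite /remove_edge hab /=.
case: eqP => [/set2_eq H|_]; by [right | left].
Qed.

Lemma re_sub e v x a b : remove_edge e v x a b -> e a b.
Proof. by case/andP. Qed.

Lemma re_sym e v x : symmetric e -> symmetric (remove_edge e v x).
Proof. by move=> se a b; rewrite /remove_edge se setUC. Qed.

Lemma re_vx e v x y : e v x -> v != x -> x != y -> remove_edge e v y v x.
Proof.
move=> hvx nvx nxy; rewrite /remove_edge hvx /=; apply/negP => /eqP/set2_eq.
case=> [[_ E]|[_ E]]; [by rewrite E eqxx in nxy | by rewrite E eqxx in nvx].
Qed.

Lemma ball_Q e v x k u : u \in ball e k.+1 v ->
  u \in ball (remove_edge e v x) k.+1 v \/ u \in ball (remove_edge e v x) k x.
Proof.
set e' := remove_edge e v x.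
elim: k u => [|k IH] u.
  case/ball_caseS=> [h|[y hy hyu]].
    by left; apply: ball_S.
  rewrite ball0P in hy; move/eqP: hy => Ey; rewrite Ey in hyu.
  case: (re_or v x hyu) => [h|[[_ ->]|[_ ->]]].
  - by left; apply: ball_step (ball_center _ 0 v) h.
  - by right; apply: ball_center.
  - by left; apply: ball_center.
case/ball_caseS=> [h|[y hy hyu]].
  by case: (IH _ h) => h'; [left; apply: ball_S | right; apply: ball_S].
case: (re_or v x hyu) => [h|[[_ ->]|[_ ->]]].
- case: (IH _ hy) => h'; [left; apply: ball_step h' h | right; apply: ball_step h' h].
- by right; apply: ball_center.
- by left; apply: ball_center.
Qed.

Lemma ball_P2_aux e v x y k u q : e v x -> e v y -> v != x -> v != y -> x != y ->
  q \in ball (remove_edge e v x) k v -> e q u ->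
  u \in ball (remove_edge e v x) k.+1 v \/ u \in ball (remove_edge e v y) k.+1 v.
Proof.
move=> hx hy nx ny nxy hq hqu.
case: (re_or v x hqu) => [h|[[_ ->]|[_ ->]]].
- by left; apply: ball_step hq h.
- by right; apply: ball_step (ball_center _ k v) (re_vx hx nx nxy).
- by left; apply: ball_center.
Qed.

Lemma ball_P2 e v x y k u : e v x -> e v y -> v != x -> v != y -> x != y ->
  u \in ball e k v ->
  u \in ball (remove_edge e v x) k v \/ u \in ball (remove_edge e v y) k v.
Proof.
move=> hx hy nx ny nxy; elim: k u => [|k IH] u.
  by rewrite !ball0P => ->; left.
case/ball_caseS=> [h|[q hq hqu]].
  by case: (IH _ h) => h'; [left; apply: ball_S | right; apply: ball_S].
case: (IH _ hq) => h.
  exact: ball_P2_aux hx hy nx ny nxy h hqu.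
have := ball_P2_aux hy hx ny nx _ h hqu; rewrite eq_sym => /(_ nxy).
by case; [right|left].
Qed.

End Graph.


Section Game.
Variable n : nat.
Implicit Types (S : profile n) (u x y z q a b : 'I_n).

Lemma outcome_sym S : symmetric (outcome S).
Proof. by move=> a b; rewrite /outcome eq_sym orbC. Qed.

Lemma dev_same S v x : x \in S v -> v \in S x ->
  outcome (deviate S v (S v :\ x)) =2 outcome S.
Proof.
move=> hx hv a b; rewrite /outcome /deviate.
case: (a =P v) => [->|na]; case: (b =P v) => [->|nb] //.
- by rewrite eqxx.
- by rewrite in_setD1; case: (b =P x) => [->|_] /=; rewrite ?hv ?orbT.
- by rewrite in_setD1; case: (a =P x) => [->|_] /=; rewrite ?hv ?orbT.
Qed.

Lemma dev_remove S v x : valid_profile S -> x \in S v -> v \notin S x ->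
  outcome (deviate S v (S v :\ x)) =2 remove_edge (outcome S) v x.
Proof.
move=> val hx hv a b; rewrite /remove_edge.
case: (boolP ([set a; b] == [set v; x])) => [/eqP/set2_eq H|H]; last first.
  rewrite andbT /outcome /deviate.
  case: (a =P v) => [Ea|na]; case: (b =P v) => [Eb|nb] //.
  - by rewrite Ea Eb eqxx.
  - rewrite Ea in_setD1; case: (b =P x) => [Eb|_] //=.
    by move: H; rewrite Ea Eb eqxx.
  - rewrite Eb in_setD1; case: (a =P x) => [Ea|_] //=.
    by move: H; rewrite Ea Eb setUC eqxx.
rewrite andbF /outcome /deviate.
case: H => [[-> ->]|[-> ->]]; (case: (x =P v) => [->|/eqP nxv]; [by rewrite eqxx | ]).
- by rewrite eqxx in_setD1 eqxx (negbTE hv) /= ?andbF.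
- by rewrite eqxx in_setD1 eqxx (negbTE hv) /= ?andbF.
Qed.

Variable R : realFieldType.
Variables (w : 'I_n -> R) (alpha : R) (beta : nat).
Hypothesis wpos : forall u, (0 < w u)%R.
Hypothesis apos : (0 < alpha)%R.

Lemma cost_dev S v x (e' : rel 'I_n) :
  outcome (deviate S v (S v :\ x)) =2 e' ->
  cost w alpha beta (deviate S v (S v :\ x)) v =
  (alpha * #|S v :\ x|%:R + \sum_(z | dist_gt e' v z beta) w z)%R.
Proof.
move=> E; rewrite /cost {1}/deviate eqxx; congr (_ + _)%R.
by apply: eq_bigl => z; rewrite /dist_gt (eq_ball _ _ E).
Qed.

Lemma ne_noboth S v x : nash w alpha beta S -> x \in S v -> v \notin S x.
Proof.
move=> [val ne] hx; apply/negP => hv.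
have := ne v (S v :\ x); rewrite in_setD1 (negbTE (val v)) andbF => /(_ isT).
rewrite (cost_dev (dev_same hx hv)) /cost (cardsD1 x (S v)) hx add1n.
rewrite -natr1 mulrDr mulr1 -addrA lerD2l gerDr leNgt apos.
done.
Qed.

Lemma ne_far S v x : nash w alpha beta S -> x \in S v ->
  exists z, z \in ball (outcome S) beta v /\
            z \notin ball (remove_edge (outcome S) v x) beta v.
Proof.
move=> hne hx; have hv := ne_noboth hne hx; case: hne => val ne.
set e := outcome S; set e' := remove_edge e v x.
case: (boolP [exists z, (z \in ball e beta v) && (z \notin ball e' beta v)]).
  by case/existsP => z /andP[h1 h2]; exists z.
rewrite negb_exists => /forallP H; exfalso.
have Eq : (\sum_(z | dist_gt e' v z beta) w z = \sum_(z | dist_gt e v z beta) w z)%R.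
  apply: eq_bigl => z; rewrite /dist_gt; move: (H z); rewrite negb_and negbK.
  case/orP=> h.
    rewrite h; apply/negP => h'; move/negP: h; apply.
    by apply: ball_sub h' => a b; apply: re_sub.
  by rewrite h (ball_sub (@re_sub _ e v x) h).
have := ne v (S v :\ x); rewrite in_setD1 (negbTE (val v)) andbF => /(_ isT).
rewrite (cost_dev (dev_remove val hx hv)) Eq /cost (cardsD1 x (S v)) hx add1n.
by rewrite -natr1 mulrDr mulr1 -addrA lerD2l gerDr leNgt apos.
Qed.

End Game.


Section Count.
Variable n : nat.
Implicit Types (e : rel 'I_n) (u x y z q a b : 'I_n).

Definition Dset e v beta x : {set 'I_n} :=
  [set u | [exists k : 'I_beta.+1,
     (u \in ball e k v) && (u \notin ball (remove_edge e v x) k v)]].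

Lemma D_disj e v beta x y u : e v x -> e v y -> v != x -> v != y ->
  u \in Dset e v beta x -> u \in Dset e v beta y -> x = y.
Proof.
move=> hx hy nx ny; rewrite !inE => /existsP[k1 /andP[h1 h1']] /existsP[k2 /andP[h2 h2']].
apply/eqP; apply/negP => /negP nxy.
case: (leqP k1 k2) => hk.
  case: (ball_P2 hx hy nx ny nxy h1) => h; first by rewrite h in h1'.
  by move/negP: h2'; apply; apply: ball_mono h.
case: (ball_P2 hx hy nx ny nxy h2) => h; last by rewrite h in h2'.
by move/negP: h1'; apply; apply: ball_mono (ltnW hk) h.
Qed.

Lemma D_big e v beta x : symmetric e -> e v x -> 1 <= beta ->
  (exists z, z \in ball e beta v /\ z \notin ball (remove_edge e v x) beta v) ->
  connect (remove_edge e v x) x v -> beta <= 3 * #|Dset e v beta x|.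
Proof.
move=> se hvx hb [z [hz hz']] hc.
set e' := remove_edge e v x.
have se' : symmetric e' by apply: re_sym.
have sub : forall a b, e' a b -> e a b by move=> a b; apply: re_sub.
case: beta hb hz hz' => [//|b] _ hz hz'.
have hzb : z \in ball e' b x.
  by case: (ball_Q x hz) => // h; rewrite h in hz'.
have hx1 : x \in ball e 1 v by apply: ball_step (ball_center e 0 v) hvx.
have exm : exists k, (fun k => z \in ball e' k x) k by exists b.
case: (ex_minnP exm) => m hm mmin.
case: (connect_ball hc) => l0 hl0.
have exl : exists k, (fun k => v \in ball e' k x) k by exists l0.
case: (ex_minnP exl) => l hl lmin.
have mb : m <= b by apply: mmin.
have hlm : b.+1 < l + m.
  rewrite ltnNge; apply/negP => H; move/negP: hz'; apply.
  apply: ball_mono H _; apply: ball_trans (ball_sym se' hl) hm.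
set d := #|Dset e v b.+1 x|.
have c1 : m.+1 <= d.
  apply: (@ball_count _ e' x) => t ht.
  have minz : forall k, k < m -> z \notin ball e' k x.
    by move=> k hk; apply/negP => h; have := mmin k h; rewrite leqNgt hk.
  case: (ball_chain hm minz ht) => q [hq hzq hqn].
  exists q; split => //.
  have htb : t.+1 < b.+2 by clear -ht mb; lia.
  rewrite inE; apply/existsP; exists (Ordinal htb); apply/andP; split.
    by have := ball_trans hx1 (ball_sub sub hq); rewrite add1n.
  apply/negP => hq0; have hq' : q \in ball e' t.+1 v := hq0.
  move/negP: hz'; apply.
  have := ball_trans hq' hzq; apply: ball_mono; clear -ht mb; lia.
have c2 : forall T, T <= b -> 2 * T + 2 <= l -> T.+1 <= d.
  move=> T hT hTl; apply: (@ball_count _ e' x) => t ht.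
  have minv : forall k, k < l -> v \notin ball e' k x.
    by move=> k hk; apply/negP => h; have := lmin k h; rewrite leqNgt hk.
  have htl : t <= l by clear -ht hTl; lia.
  case: (ball_chain hl minv htl) => q [hq _ hqn].
  exists q; split => //.
  have htb : t.+1 < b.+2 by clear -ht hT; lia.
  rewrite inE; apply/existsP; exists (Ordinal htb); apply/andP; split.
    by have := ball_trans hx1 (ball_sub sub hq); rewrite add1n.
  apply/negP => hq0; have hq' : q \in ball e' t.+1 v := hq0.
  have := ball_trans hq (ball_sym se' hq'); apply/negP; apply: minv; clear -ht hTl; lia.
case: (leqP (2 * b + 2) l) => h1.
  have := c2 b (leqnn b) h1; clear -mb; lia.
case: (leqP 2 l) => h2; last by clear -c1 hlm h2 mb; lia.
have hdiv := divn_eq (l - 2) 2; have hmod := ltn_pmod (l - 2) (isT : 0 < 2).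
move: (c2 ((l - 2) %/ 2)) hdiv hmod.
move: ((l - 2) %/ 2) ((l - 2) %% 2) => T r.
clear -h1 h2 c1 mb hlm => c2' hdiv hmod; lia.
Qed.

End Count.


Section Final.
Variable n : nat.
Implicit Types (e : rel 'I_n).

Lemma sum_disj (N : {set 'I_n}) (D : 'I_n -> {set 'I_n}) :
  (forall x y u, x \in N -> y \in N -> u \in D x -> u \in D y -> x = y) ->
  \sum_(x in N) #|D x| <= n.
Proof.
move=> H.
rewrite (eq_bigr (fun x => \sum_u (if u \in D x then 1 else 0))); last first.
  by move=> x _; rewrite -sum1_card big_mkcond.
rewrite exchange_big /=.
apply: (@leq_trans (\sum_(u : 'I_n) 1)); last by rewrite sum1_card card_ord.
apply: leq_sum => u _.
rewrite -big_mkcondr sum1dep_card; apply/card_le1_eqP => x y.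
by rewrite !inE => /andP[hx hux] /andP[hy huy]; exact: (H y x u hy hx huy hux).
Qed.

Lemma ncomp_lt e e' a b : symmetric e -> symmetric e' ->
  (forall x y, e' x y -> e x y) -> e a b -> ~~ connect e' a b ->
  ncomp e < ncomp e'.
Proof.
move=> se se' sub hab nab.
have ce := sym_connect_sym se; have ce' := sym_connect_sym se'.
have subc : forall x y, connect e' x y -> connect e x y.
  by apply: connect_sub => x y h; apply: connect1; apply: sub.
have cardE : forall f : rel 'I_n, ncomp f = #|[set r | roots f r]|.
  by move=> f; rewrite /ncomp cardsE; apply: eq_card => r; rewrite !inE andbT.
rewrite !cardE.
have img : fingraph.root e @: [set r | roots e' r] = [set r | roots e r].
  apply/setP => r; apply/imsetP/idP.
    by case=> s _ ->; rewrite inE roots_root.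
  rewrite inE => /eqP hr; exists (fingraph.root e' r); first by rewrite inE roots_root.
  rewrite -{1}hr; apply/(fingraph.rootP ce)/subc/connect_root.
rewrite -img ltn_neqAle leq_imset_card andbT.
apply/negP => /imset_injP inj.
have ha : fingraph.root e' a \in [set r | roots e' r] by rewrite inE roots_root.
have hb : fingraph.root e' b \in [set r | roots e' r] by rewrite inE roots_root.
have Eq := inj _ _ ha hb; move/negP: nab; apply.
apply/(fingraph.rootP ce'); apply: Eq.
have -> : fingraph.root e (fingraph.root e' a) = fingraph.root e a.
  by apply/esym/(fingraph.rootP ce)/subc/connect_root.
have -> : fingraph.root e (fingraph.root e' b) = fingraph.root e b.
  by apply/esym/(fingraph.rootP ce)/subc/connect_root.
by apply/(fingraph.rootP ce)/connect1.
Qed.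

End Final.

Unset Implicit Arguments.
Theorem lemma2 (R : realFieldType) (n : nat) (w : 'I_n -> R) (alpha : R)
    (beta : nat) (S : profile n) (v : 'I_n) :
  (forall u, (0 < w u)%R) -> (0 < alpha)%R ->
  (1 <= beta)%N -> (beta <= n - 1)%N -> (1 < beta)%N ->
  star_game w alpha beta ->
  nash w alpha beta S ->
  (6 * n < beta * #|S v|)%N ->
  exists X : {set 'I_n},
    X \subset S v /\ (3 * n <= beta * #|X|)%N /\
    forall x, x \in X -> bridge (outcome S) v x.
Proof.
move=> wpos apos hb1 _ _ _ hne hbig.
have [val _] := hne.
set e := outcome S.
have se : symmetric e := outcome_sym S.
have evx : forall x, x \in S v -> e v x.
  move=> x hx; rewrite /e /outcome hx orbT andbT.
  by apply/eqP => E; move: hx (val v); rewrite E => ->.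
have nvx : forall x, x \in S v -> v != x by move=> x /evx /andP[].
set N := [set x in S v | connect (remove_edge e v x) x v].
have NS : N \subset S v by apply/subsetP => x; rewrite inE => /andP[].
exists (S v :\: N); split; first exact: subsetDl.
split; last first.
  move=> x; rewrite in_setD inE negb_and => /andP[/orP[hn|hn] hx].
    by rewrite hx in hn.
  split; first exact: evx.
  apply: (@ncomp_lt _ e (remove_edge e v x) x v) => //.
  - exact: re_sym.
  - by move=> a b; apply: re_sub.
  - by have := evx x hx; rewrite se.
have hN : beta * #|N| <= 3 * n.
  have H : \sum_(x in N) beta <= \sum_(x in N) 3 * #|Dset e v beta x|.
    apply: leq_sum => x; rewrite inE => /andP[hx hc].
    exact: D_big se (evx x hx) hb1 (ne_far apos hne hx) hc.
  rewrite sum_nat_const -big_distrr /= in H.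
  have H2 : \sum_(x in N) #|Dset e v beta x| <= n.
    apply: sum_disj => x y u hx hy; move: (subsetP NS x hx) (subsetP NS y hy) => hx' hy'.
    exact: D_disj (evx x hx') (evx y hy') (nvx x hx') (nvx y hy').
  rewrite mulnC; apply: (leq_trans H); exact: leq_mul (leqnn 3) H2.
have hcard := cardsID N (S v); rewrite (setIidPr NS) in hcard.
rewrite -hcard mulnDr in hbig; clear -hbig hN; lia.
Qed.
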